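(* Let $\mathbb{F}_q$ be a finite field and let $z_1,\dots,z_n$ be indeterminates. For $k=1,\dots,n$ let $$f_k=\prod_{(\alpha_1,\dots,\alpha_{k-1})\in\mathbb{F}_q^{k-1}}\bigl(z_k+\alpha_{k-1}z_{k-1}+\cdots+\alpha_1z_1\bigr)\in\mathbb{F}_q[z_1,\dots,z_n]$$ (so $f_1=z_1$). Then for each $k=1,\dots,n$, the differential $df_k=\sum_{l=1}^n\frac{\partial f_k}{\partial z_l}dz_l$ is divisible by $\prod_{i<k}f_i^{\,q-2}$, i.e. every partial derivative $\frac{\partial f_k}{\partial z_l}$ is divisible by $\prod_{i<k}f_i^{\,q-2}$.
   Context: The $f_k$ are the basic invariants of the group of lower triangular unipotent matrices $\mathrm{U}_n(\mathbb{F}_q)$ acting on $V=\mathbb{F}_q^n$ with $z_1,\dots,z_n$ the dual basis of $V^*$. *)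

(* Defs.v *)
From HB Require Import structures.
From mathcomp Require Import all_boot all_order all_algebra all_field.
From mathcomp Require Import mpoly.
Set Implicit Arguments. Unset Strict Implicit. Unset Printing Implicit Defensive.
Import GRing.Theory.
Local Open Scope ring_scope.

Definition mdvd (F : finFieldType) (n : nat) (d p : {mpoly F[n]}) : Prop :=
  exists r : {mpoly F[n]}, p = r * d.

(* f_k for the 0-based index k : 'I_n (the paper's f_{k+1}):
   product over alpha in F^k of  z_k + sum_{j<k} alpha_j z_j. *)
Definition fk (F : finFieldType) (n : nat) (k : 'I_n) : {mpoly F[n]} :=
  \prod_(alpha : {ffun 'I_k -> F})
     ('X_k + \sum_(j < k) alpha j *: 'X_(widen_ord (ltnW (ltn_ord k)) j)).
Arguments fk F [n] k.

(* Main.v *)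
Require Import Defs.
From HB Require Import structures.
From mathcomp Require Import all_boot all_order all_algebra all_field.
From mathcomp Require Import mpoly.
From mathcomp Require Import ring.
Set Implicit Arguments. Unset Strict Implicit. Unset Printing Implicit Defensive.
Import GRing.Theory.
Local Open Scope ring_scope.

Section S.
Variables (F : finFieldType) (n : nat).
Local Notation R := {mpoly F[n]}.
Local Notation q := #|F|.

Lemma q_gt1 : (1 < q)%N. Proof. exact: finNzRing_gt1. Qed.

Lemma monic_coef_hi (p : {poly R}) d j : p \is monic -> size p = d.+1 ->
  (d <= j)%N -> p`_j = (j == d)%:R.
Proof.
move=> mp sp; rewrite leq_eqVlt => /orP[/eqP<-|ltdj].
  by rewrite eqxx -(monicP mp) lead_coefE sp.
by rewrite gtn_eqF // nth_default // sp.
Qed.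

Lemma prod_lin (A B : R) :
  \prod_(c : F) (A + c *: B) = A ^+ q - B ^+ q.-1 * A.
Proof.
have q1 := q_gt1.
have [->|nzB] := eqVneq B 0.
  under eq_bigr do rewrite scaler0 addr0.
  have hq : (q.-1 == 0)%N = false by case: (q) q1 => [|[|]].
  by rewrite prodr_const expr0n /= hq mul0r subr0.
pose rs := [seq - (c *: B) | c <- enum F].
pose p1 : {poly R} := 'X^q - (B ^+ q.-1)%:P * 'X.
pose p2 : {poly R} := \prod_(a <- rs) ('X - a%:P).
have szrs : size rs = q by rewrite size_map -cardE.
have mp1 : p1 \is monic.
  idtac.
  rewrite monicE /p1 lead_coefDl ?lead_coefXn //.
  rewrite size_polyN size_polyXn.
  by rewrite mul_polyC (leq_ltn_trans (size_scale_leq _ _)) // size_polyX ltnS.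
have sp1 : size p1 = q.+1.
  rewrite /p1 size_polyDl ?size_polyXn //.
  rewrite size_polyN.
  by rewrite mul_polyC (leq_ltn_trans (size_scale_leq _ _)) // size_polyX ltnS.
have mp2 : p2 \is monic by apply: monic_prod_XsubC.
have sp2 : size p2 = q.+1 by rewrite size_prod_XsubC szrs.
have e : p1 = p2.
  apply/eqP; rewrite -subr_eq0; apply/eqP.
  apply: (roots_geq_poly_eq0 (rs := rs)).
  - apply/allP => x /mapP[c _ ->]; rewrite rootE hornerD hornerN.
    have -> : p2.[- (c *: B)] = 0.
      by apply/eqP; rewrite -rootE root_prod_XsubC; apply/mapP; exists c; rewrite ?mem_enum.
    rewrite /p1 hornerD hornerN hornerXn hornerMX hornerC -scaleNr exprZn expf_card.
    by rewrite -scalerAr -exprSr prednK ?subrr ?subr0 // ltnW.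
  - rewrite (map_inj_uniq (f := fun c : F => - (c *: B))) ?enum_uniq // => c d /eqP.
    rewrite eqr_opp -subr_eq0 -scalerBl.
    by rewrite scaler_eq0 (negPf nzB) orbF subr_eq0 => /eqP.
  - rewrite szrs; apply/leq_sizeP => j qj; rewrite coefB.
    by rewrite (monic_coef_hi mp1 sp1 qj) (monic_coef_hi mp2 sp2 qj) subrr.
have -> : A ^+ q - B ^+ q.-1 * A = p1.[A].
  by rewrite /p1 hornerD hornerN hornerXn hornerMX hornerC.
rewrite e /p2 horner_prod big_map big_enum /=; apply: eq_bigr => c _.
by rewrite hornerXsubC opprK.
Qed.

Definition Z (j : nat) : R := if insub j is Some i then 'X_i else 0.

Lemma ZE (i : 'I_n) : Z i = 'X_i.
Proof. by rewrite /Z valK. Qed.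

Definition P (k : nat) (u : R) : R :=
  \prod_(a : {ffun 'I_k -> F}) (u + \sum_(j < k) a j *: Z j).

Lemma fkE (k : 'I_n) : fk F k = P k (Z k).
Proof.
rewrite /fk /P ZE; apply: eq_bigr => a _; congr (_ + _).
by apply: eq_bigr => j _; rewrite -ZE.
Qed.

Lemma P0 u : P 0 u = u.
Proof.
rewrite /P; under eq_bigr do rewrite big_ord0 addr0.
by rewrite prodr_const card_ffun card_ord expn0 expr1.
Qed.

Lemma PS k u : P k.+1 u = \prod_(c : F) P k (u + c *: Z k).
Proof.
rewrite /P pair_big /=.
pose h (x : F * {ffun 'I_k -> F}) : {ffun 'I_k.+1 -> F} :=
  [ffun i => if unlift ord_max i is Some j then x.2 j else x.1].
pose g (a : {ffun 'I_k.+1 -> F}) : F * {ffun 'I_k -> F} :=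
  (a ord_max, [ffun j => a (lift ord_max j)]).
have hK : cancel h g.
  case=> c b; rewrite /g /h /= !ffunE unlift_none; congr (_, _).
  by apply/ffunP => j; rewrite !ffunE liftK.
have gK : cancel g h.
  move=> a; apply/ffunP => i; rewrite /g /h ffunE.
  by case: unliftP => [j ->|->] /=; rewrite ?ffunE.
rewrite (reindex h); last by exists g => x _.
apply: eq_bigr => [[c b]] _; rewrite big_ord_recr /= /h !ffunE unlift_none.
rewrite [X in u + X]addrC addrA /=; congr (_ + _).
apply: eq_bigr => j _; rewrite ffunE.
have -> : widen_ord (leqnSn k) j = lift ord_max j.
  by apply: val_inj; rewrite /= /bump leqNgt ltn_ord.
by rewrite liftK.
Qed.

Lemma q_pchar : exists2 p, p \in [char R] & ([char R]).-nat q /\ (p %| q)%N.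
Proof.
have [p pr pF] := finPcharP F.
have pR : p \in [char R] by rewrite (pchar_lalg R).
exists p => //.
have := card_pprimeChar pF; rewrite /=.
move: (logn _ _) => m e; rewrite e.
rewrite (eq_pnat _ (pcharf_eq pR)) pnatX pnat_id //; split => //.
case: m e => [|m] e; last by rewrite dvdn_exp.
by have := q_gt1; rewrite e.
Qed.

Lemma natq0 : q%:R = 0 :> R.
Proof.
by have [p pR [_ dq]] := q_pchar; apply/eqP; rewrite -(dvdn_pcharf pR).
Qed.

Lemma frobD (x y : R) : (x + y) ^+ q = x ^+ q + y ^+ q.
Proof. by have [p _ [qn _]] := q_pchar; rewrite exprDn_pchar. Qed.

Lemma frobZ (c : F) (x : R) : (c *: x) ^+ q = c *: x ^+ q.
Proof. by rewrite exprZn expf_card. Qed.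

Definition Phi (f x : R) := x ^+ q - f ^+ q.-1 * x.

Lemma Phi_lin f x y c : Phi f (x + c *: y) = Phi f x + c *: Phi f y.
Proof.
by rewrite /Phi frobD frobZ mulrDr -scalerAr scalerBr opprD addrACA.
Qed.

Lemma Plin k u v c : P k (u + c *: v) = P k u + c *: P k v.
Proof.
elim: k u v c => [|k IH] u v c; first by rewrite !P0.
have PS2 w : P k.+1 w = Phi (P k (Z k)) (P k w).
  by rewrite PS; under eq_bigr do rewrite IH; rewrite prod_lin.
by rewrite !PS2 IH Phi_lin.
Qed.

Lemma PS2 k w : P k.+1 w = Phi (P k (Z k)) (P k w).
Proof. by rewrite PS; under eq_bigr do rewrite Plin; rewrite prod_lin. Qed.


Lemma derX l (x : R) j : mderiv l (x ^+ j.+1) = (x ^+ j * mderiv l x) *+ j.+1.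
Proof.
elim: j => [|j IH]; first by rewrite expr1 expr0 mul1r.
rewrite exprS mderivM IH mulrnAr mulrA -exprS [mderiv l x * _]mulrC.
by rewrite [in RHS]mulrSr addrC.
Qed.

Lemma alg (S : comNzRingType) (T f d r1 r2 : S) (j : nat) :
  0 - ((f ^+ j * (r2 * d)) *+ j.+1 * T + f ^+ j.+1 * (r1 * d)) =
  (- ((r2 * T) *+ j.+1 + f * r1)) * (d * f ^+ j).
Proof.
rewrite -(mulr_natr (f ^+ j * (r2 * d))) -(mulr_natr (r2 * T)) exprSr.
move: (f ^+ j) ((j.+1)%:R : S) => e N; ring.
Qed.

Definition D k := \prod_(i < k) P i (Z i) ^+ (q - 2).

Lemma DS k : D k.+1 = D k * P k (Z k) ^+ (q - 2).
Proof. by rewrite /D big_ord_recr. Qed.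

Lemma Pder k m l : mdvd (D k) (mderiv l (P k (Z m))).
Proof.
have hq : q = (q - 2).+2 by rewrite -addn2 subnK ?q_gt1.
elim: k m => [|k IH] m.
  by exists (mderiv l (P 0 (Z m))); rewrite /D big_ord0 mulr1.
have [r1 e1] := IH m; have [r2 e2] := IH k.
rewrite PS2 /Phi mderivB mderivM.
have -> : mderiv l (P k (Z m) ^+ q) = 0.
  by rewrite hq derX -mulr_natr -hq natq0 mulr0.
have -> : q.-1 = (q - 2).+1 by rewrite {1}hq.
rewrite derX e1 e2 DS.
by exists (- ((r2 * P k (Z m)) *+ (q - 2).+1 + P k (Z k) * r1)); rewrite alg.
Qed.
End S.

Theorem lemma6p7 (F : finFieldType) (n : nat) (k l : 'I_n) :
  mdvd (\prod_(i < n | (i < k)%N) fk F i ^+ (#|F| - 2)%N) (mderiv l (fk F k)).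
Proof.
rewrite fkE.
have -> : \prod_(i < n | (i < k)%N) fk F i ^+ (#|F| - 2)%N = D F n k.
  rewrite /D (big_ord_widen_cond _ xpredT (fun i => @P F n i (@Z F n i) ^+ (#|F| - 2)) (ltnW (ltn_ord k))).
  by apply: eq_bigr => i _; rewrite fkE.
exact: Pder.
Qed.
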